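(* Let $p$ be a prime and $G=S^1\times C_p$. Then $G$ is not a BU-group of type II: there exist fixed-point-free orthogonal $G$-representations $V,W$ with $\dim V=\dim W$ and a $G$-map $f:S(V)\to S(W)$ with $\deg f=0$.
   Context: An orthogonal $G$-representation $V$ is fixed-point-free if $V^G=0$; $S(V)$ denotes its unit sphere, and a $G$-map is a continuous $G$-equivariant map. $G$ is a BU-group of type II if for all fixed-point-free orthogonal $G$-representations $V,W$ with $\dim V=\dim W$, every $G$-map $f:S(V)\to S(W)$ has $\deg f\neq 0$. *)

(* Defs.v *)
From HB Require Import structures.
From mathcomp Require Import all_boot all_order all_algebra.
From mathcomp Require Import all_classical all_reals all_analysis.
Set Implicit Arguments. Unset Strict Implicit. Unset Printing Implicit Defensive.
Import Order.TTheory GRing.Theory Num.Theory.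
Import numFieldNormedType.Exports.
Local Open Scope classical_set_scope.
Local Open Scope ring_scope.

(* Euclidean unit sphere S(R^n) in row vectors 'rV[R]_n
   (the built-in norm on 'rV is the sup norm, so we use the Euclidean one). *)
Definition unit_sphere (R : realType) (n : nat) : set 'rV[R]_n :=
  [set x | \sum_(i < n) (x ord0 i) ^+ 2 = 1].
Arguments unit_sphere {R} n.

(* The group G = S^1 x C_p, with S^1 = R/Z written additively via the angle
   t : R (t and t+1 give the same element) and C_p = 'Z_p.
   An orthogonal G-representation of dimension n is a continuous homomorphism
   rho : G -> O(n); rho t k is the matrix of (t mod 1, k), acting on row
   vectors by v |-> v *m rho t k (G is abelian, so left/right is immaterial). *)
Definition orth_rep (R : realType) (p n : nat)
    (rho : R -> 'Z_p -> 'M[R]_n) : Prop :=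
  [/\ forall t k, rho t k *m (rho t k)^T = 1%:M,
      rho 0 0 = 1%:M,
      forall s t k l, rho (s + t) (k + l)%R = rho s k *m rho t l,
      forall t k, rho (t + 1) k = rho t k &
      forall k (i j : 'I_n), continuous (fun t => rho t k i j)].

Definition fixed_point_free (R : realType) (p n : nat)
    (rho : R -> 'Z_p -> 'M[R]_n) : Prop :=
  forall v : 'rV[R]_n, (forall t k, v *m rho t k = v) -> v = 0.

Definition Gmap (R : realType) (p n : nat) (rhoV rhoW : R -> 'Z_p -> 'M[R]_n)
    (f : 'rV[R]_n -> 'rV[R]_n) : Prop :=
  [/\ forall x, unit_sphere n x -> unit_sphere n (f x),
      {within unit_sphere n, continuous f} &
      forall x t k, unit_sphere n x -> f (x *m rhoV t k) = f x *m rhoW t k].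

(* Brouwer degree, via the differential-topology definition (Milnor):
   deg f = d iff there is a C^1 map g : S^{n-1} -> S^{n-1} homotopic to f
   and a regular value y of g such that d is the signed count of g^{-1}(y).
   The local sign at x is the sign of det M, where M is the linear map of R^n
   sending x to g x and acting as dg_x on the tangent space x^perp;
   with the orientation "outward normal first" this is the local degree. *)
Definition sphere_local_matrix (R : realType) (n : nat)
    (g : 'rV[R]_n -> 'rV[R]_n) (x : 'rV[R]_n) : 'M[R]_n :=
  (1%:M - x^T *m x) *m 'J g x + x^T *m g x.

Definition has_degree (R : realType) (n : nat)
    (f : 'rV[R]_n -> 'rV[R]_n) (d : int) : Prop :=
  exists (g : 'rV[R]_n -> 'rV[R]_n) (U : set 'rV[R]_n)
         (H : R * 'rV[R]_n -> 'rV[R]_n) (y : 'rV[R]_n) (s : seq 'rV[R]_n),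
    [/\
        (open U /\ unit_sphere n `<=` U),
        ((forall x, U x -> differentiable g x) /\
          (forall i j, {in U, continuous (fun x => 'J g x i j)}) /\
          (forall x, unit_sphere n x -> unit_sphere n (g x))),
        [/\ {within `[0, 1]%classic `*` unit_sphere n, continuous H},
            (forall t x, 0 <= t <= 1 -> unit_sphere n x ->
                 unit_sphere n (H (t, x))),
            (forall x, unit_sphere n x -> H (0, x) = f x) &
            (forall x, unit_sphere n x -> H (1, x) = g x)],
        [/\ unit_sphere n y, uniq s,
            (forall x, (x \in s) <-> (unit_sphere n x /\ g x = y)) &
            (forall x, x \in s -> \det (sphere_local_matrix g x) != 0)] &
        d = \sum_(x <- s) sgz (\det (sphere_local_matrix g x))].

(* Main.v *)
Require Import Defs.
From HB Require Import structures.
From mathcomp Require Import all_boot all_order all_algebra.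
From mathcomp Require Import all_classical all_reals all_analysis.
From mathcomp Require Import ring lra.
Import Order.TTheory GRing.Theory Num.Theory.
Import numFieldNormedType.Exports.
Local Open Scope classical_set_scope.
Local Open Scope ring_scope.
Set Implicit Arguments. Unset Strict Implicit. Unset Printing Implicit Defensive.

Section Cpx.
Variable R : realType.
Definition cmul (u z : R * R) : R * R := (u.1 * z.1 - u.2 * z.2, u.1 * z.2 + u.2 * z.1).
Definition cadd (u z : R * R) : R * R := (u.1 + z.1, u.2 + z.2).
Definition ccj (u : R * R) : R * R := (u.1, - u.2).
Definition cn2 (u : R * R) : R := u.1 ^+ 2 + u.2 ^+ 2.
Fixpoint cpow (z : R * R) (n : nat) : R * R :=
  if n is n'.+1 then cmul (cpow z n') z else (1, 0).
Definition cE (t : R) : R * R := (cos t, sin t).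

Lemma cpowM u z n : cpow (cmul u z) n = cmul (cpow u n) (cpow z n).
Proof.
elim: n => [|n IH] /=; first by rewrite /cmul /=; congr pair; ring.
rewrite IH /cmul /=; congr pair; ring.
Qed.

Lemma cEadd a b : cE (a + b) = cmul (cE a) (cE b).
Proof. by rewrite /cE /cmul /= cosD sinD; congr pair; ring. Qed.

Lemma cpowE t n : cpow (cE t) n = cE (t *+ n).
Proof.
elim: n => [|n IH] /=; first by rewrite /cE mulr0n cos0 sin0.
by rewrite IH mulrS addrC cEadd.
Qed.

Lemma cE_per t n : cE (t + (pi *+ 2) *+ n) = cE t.
Proof.
elim: n => [|n IH]; first by rewrite mulr0n addr0.
by rewrite mulrSr addrA /cE cosD2pi sinD2pi -/(cE _) IH.
Qed.

Lemma cn2_mul u z : cn2 (cmul u z) = cn2 u * cn2 z.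
Proof. rewrite /cn2 /cmul /=; ring. Qed.

Lemma cn2_pow z n : cn2 (cpow z n) = cn2 z ^+ n.
Proof.
elim: n => [|n IH] /=; first by rewrite /cn2 /= expr0n /= expr1n addr0.
by rewrite cn2_mul IH exprS mulrC.
Qed.

Lemma cn2E t : cn2 (cE t) = 1.
Proof. by rewrite /cn2 /= cos2Dsin2. Qed.

Lemma cn2_ge0 z : 0 <= cn2 z.
Proof. by rewrite /cn2 addr_ge0 // sqr_ge0. Qed.

Lemma cn2_eq0 z : cn2 z = 0 -> z = (0, 0).
Proof.
case: z => a b; rewrite /cn2 /= => h.
have ha : a ^+ 2 = 0 by apply/eqP; rewrite eq_le sqr_ge0 andbT -h lerDl sqr_ge0.
have hb : b ^+ 2 = 0 by move: h; rewrite ha add0r.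
by move/eqP: ha; rewrite sqrf_eq0 => /eqP ->; move/eqP: hb; rewrite sqrf_eq0 => /eqP ->.
Qed.

Lemma cn2_0 : cn2 (0, 0) = 0.
Proof. by rewrite /cn2 /= expr0n /= addr0. Qed.

Lemma cmulDl u v z : cmul (cadd u v) z = cadd (cmul u z) (cmul v z).
Proof. rewrite /cmul /cadd /=; congr pair; ring. Qed.

End Cpx.

Section Rot.
Variable R : realType.
Definition i1 : 'I_2 := @Ordinal 2 1 isT.
Definition tor (z : R * R) : 'rV[R]_2 := \row_j (if j == ord0 then z.1 else z.2).
Definition ofr (u : 'rV[R]_2) : R * R := (u ord0 ord0, u ord0 i1).
Definition rotm (t : R) : 'M[R]_2 :=
  \matrix_(i, j) (if i == j then cos t else if i == ord0 then sin t else - sin t).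

Lemma ofrK : cancel ofr tor.
Proof.
move=> u; apply/rowP => j; rewrite mxE /ofr /=.
case: j => [[|[|//]]] Hj /=.
  by congr (u _ _); apply: val_inj.
by congr (u _ _); apply: val_inj.
Qed.

Lemma torK : cancel tor ofr.
Proof. by case=> a b; rewrite /ofr /tor !mxE. Qed.

Lemma ofr_inj : injective ofr.
Proof. exact: can_inj ofrK. Qed.

Lemma sum2 (F : 'I_2 -> R) : \sum_(i < 2) F i = F ord0 + F i1.
Proof. by rewrite !big_ord_recl big_ord0 addr0; congr (_ + F _); apply: val_inj. Qed.

Lemma ofr_rot u t : ofr (u *m rotm t) = cmul (ofr u) (cE t).
Proof.
rewrite /ofr /cmul /cE !mxE !sum2 !mxE /=.
congr pair; ring.
Qed.

Lemma mx2_ext (A B : 'M[R]_2) : (forall u, ofr (u *m A) = ofr (u *m B)) -> A = B.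
Proof.
move=> h; apply/row_matrixP => i; rewrite !rowE.
by apply: ofr_inj; apply: h.
Qed.

Lemma rot_mul a b : rotm a *m rotm b = rotm (a + b).
Proof.
apply: mx2_ext => u; rewrite mulmxA !ofr_rot cEadd /cmul /=; congr pair; ring.
Qed.

Lemma rotm0 : rotm 0 = 1%:M.
Proof.
apply/matrixP => i j; rewrite !mxE cos0 sin0 oppr0.
by case: ifP => //; case: ifP.
Qed.

Lemma rot_tr a : (rotm a)^T = rotm (- a).
Proof.
apply/matrixP => i j; rewrite !mxE cosN sinN eq_sym.
case: i => [[|[|//]]] Hi; case: j => [[|[|//]]] Hj //=;
  by rewrite ?opprK.
Qed.

Lemma rot_orth a : rotm a *m (rotm a)^T = 1%:M.
Proof. by rewrite rot_tr rot_mul subrr rotm0. Qed.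

Lemma rot_per t n : rotm (t + (pi *+ 2) *+ n) = rotm t.
Proof. by apply: mx2_ext => u; rewrite !ofr_rot cE_per. Qed.

Lemma rot_pi : rotm pi = - 1%:M.
Proof.
apply/matrixP => i j; rewrite !mxE cospi sinpi oppr0.
by case: (i == j); case: (i == ord0); rewrite /= ?oppr0.
Qed.

Definition sqn n (u : 'rV[R]_n) : R := \sum_(i < n) u ord0 i ^+ 2.

Lemma sq2 u : sqn u = cn2 (ofr u).
Proof. by rewrite /sqn sum2. Qed.

Lemma sq_rot u t : sqn (u *m rotm t) = sqn u.
Proof. by rewrite !sq2 ofr_rot cn2_mul cn2E mulr1. Qed.

Lemma sq_row m n (a : 'rV[R]_m) (b : 'rV[R]_n) : sqn (row_mx a b) = sqn a + sqn b.
Proof.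
by rewrite /sqn big_split_ord /=; congr (_ + _); apply: eq_bigr => i _;
  rewrite ?row_mxEl ?row_mxEr.
Qed.

Lemma sqZ n c (u : 'rV[R]_n) : sqn (c *: u) = c ^+ 2 * sqn u.
Proof.
rewrite /sqn mulr_sumr; apply: eq_bigr => i _; rewrite mxE; ring.
Qed.

Lemma sqN n (u : 'rV[R]_n) : sqn (- u) = sqn u.
Proof. by rewrite -scaleN1r sqZ sqrrN expr1n mul1r. Qed.
End Rot.

Section Brep.
Variables (R : realType) (p : nat).
Variables (a1 a2 : R -> 'Z_p -> R).
Definition brep t k : 'M[R]_(2 + 2) := block_mx (rotm (a1 t k)) 0 0 (rotm (a2 t k)).

Definition good_ang (a : R -> 'Z_p -> R) :=
  [/\ a 0 0 = 0,
      forall s t k l, exists q : nat, a s k + a t l = a (s + t) (k + l)%R + (pi *+ 2) *+ q,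
      forall t k, exists q : nat, a (t + 1) k = a t k + (pi *+ 2) *+ q &
      forall k, continuous (fun t : R => a t k)].

Lemma rot_cont (a : R -> R) (i j : 'I_2) : continuous a -> continuous (fun t => rotm (a t) i j).
Proof.
move=> ca t; rewrite /rotm.
have -> : (fun t => (\matrix_(i, j) (if i == j then cos (a t) else if i == ord0 then sin (a t) else - sin (a t))) i j)
   = (fun t => (if i == j then cos (a t) else if i == ord0 then sin (a t) else - sin (a t))).
  by apply: funext => x; rewrite mxE.
case: (i == j); last case: (i == ord0).
- exact: (continuous_comp (ca t) (@continuous_cos R _)).
- exact: (continuous_comp (ca t) (@continuous_sin R _)).
- apply: continuousN; exact: (continuous_comp (ca t) (@continuous_sin R _)).
Qed.

Lemma brep_orth : good_ang a1 -> good_ang a2 -> orth_rep brep.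
Proof.
move=> [h10 h1a h1p h1c] [h20 h2a h2p h2c]; split.
- move=> t k; rewrite /brep tr_block_mx !trmx0 mulmx_block !mulmx0 !mul0mx !addr0 !add0r.
  by rewrite !rot_orth scalar_mx_block.
- by rewrite /brep h10 h20 rotm0 scalar_mx_block.
- move=> s t k l; rewrite /brep mulmx_block !mulmx0 !mul0mx !addr0 !add0r !rot_mul.
  have [q1 ->] := h1a s t k l; have [q2 ->] := h2a s t k l.
  by rewrite !rot_per.
- move=> t k; rewrite /brep.
  have [q1 ->] := h1p t k; have [q2 ->] := h2p t k.
  by rewrite !rot_per.
- move=> k i j; rewrite /brep.
  rewrite -[i](@fintype.splitK 2 2) -[j](@fintype.splitK 2 2); case: (fintype.split i) => i'; case: (fintype.split j) => j' /=.
  + under eq_fun do rewrite block_mxEul. exact: rot_cont.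
  + under eq_fun do rewrite block_mxEur mxE. exact: cst_continuous.
  + under eq_fun do rewrite block_mxEdl mxE. exact: cst_continuous.
  + under eq_fun do rewrite block_mxEdr. exact: rot_cont.
Qed.
End Brep.

Section Angles.
Variables (R : realType) (p : nat) (hp : (1 < p)%N).

Definition aV1 (t : R) (k : 'Z_p) := (pi : R) *+ 2 * (t + (k : nat)%:R / p%:R).
Definition aV2 (t : R) (k : 'Z_p) := (pi : R) *+ 2 * t.
Definition aW1 (t : R) (k : 'Z_p) := (pi : R) *+ 2 * ((k : nat)%:R / p%:R).
Definition aW2 (t : R) (k : 'Z_p) := (pi : R) *+ 2 * (p%:R * t).

Lemma Zp_val_add (k l : 'Z_p) : (nat_of_ord (k + l)%R = ((k : nat) + (l : nat)) %% p)%N.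
Proof. by case: p hp k l => [|[|p']]. Qed.

Lemma Zp_val0 : (nat_of_ord (0%R : 'Z_p) = 0)%N.
Proof. by case: p hp => [|[|p']]. Qed.

Lemma pR_neq0 : (p%:R : R) != 0.
Proof. by rewrite pnatr_eq0 -lt0n ltnW. Qed.

Lemma Zp_frac (k l : 'Z_p) : exists q : nat,
  (k : nat)%:R / p%:R + (l : nat)%:R / p%:R = (nat_of_ord (k + l)%R)%:R / (p%:R : R) + q%:R.
Proof.
exists ((k + l) %/ p)%N; rewrite Zp_val_add.
have e := divn_eq (k + l) p.
apply: (mulIf pR_neq0).
rewrite mulrDl !mulrDl -!mulrA !mulVf ?pR_neq0 // !mulr1 -!natrD -natrM -natrD.
by rewrite [X in _ = X%:R]addnC -e.
Qed.

Lemma lin_cont (a b : R) : continuous (fun t : R => a * t + b).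
Proof.
move=> x; apply: continuousD; last exact: cst_continuous.
by apply: continuousM; [exact: cst_continuous | exact: cvg_id].
Qed.

Lemma cont_ext (f g : R -> R) : f =1 g -> continuous f -> continuous g.
Proof. by move=> /funext ->. Qed.

Lemma good_aV1 : good_ang aV1.
Proof.
split.
- by rewrite /aV1 Zp_val0 mul0r addr0 mulr0.
- move=> s t k l; have [q hq] := Zp_frac k l; exists q.
  rewrite /aV1 -[X in _ = _ + X]mulr_natr -!mulrDr; congr (_ * _).
  by rewrite addrACA hq addrA.
- move=> t k; exists 1%N; rewrite /aV1 -[X in _ = _ + X]mulr_natr -mulrDr; congr (_ * _); ring.
- move=> k; apply: (cont_ext _ (@lin_cont (pi *+ 2) (pi *+ 2 * ((k : nat)%:R / p%:R)))) => t.
  by rewrite /aV1 mulrDr.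
Qed.

Lemma good_aV2 : good_ang aV2.
Proof.
split.
- by rewrite /aV2 mulr0.
- move=> s t k l; exists 0%N; rewrite /aV2 mulr0n addr0 mulrDr //.
- move=> t k; exists 1%N; rewrite /aV2 -[X in _ = _ + X]mulr_natr -mulrDr //.
- move=> k; apply: (cont_ext _ (@lin_cont (pi *+ 2) 0)) => t.
  by rewrite /aV2 addr0.
Qed.

Lemma good_aW1 : good_ang aW1.
Proof.
split.
- by rewrite /aW1 Zp_val0 mul0r mulr0.
- move=> s t k l; have [q hq] := Zp_frac k l; exists q.
  by rewrite /aW1 -[X in _ = _ + X]mulr_natr -!mulrDr hq.
- move=> t k; exists 0%N; rewrite /aW1 mulr0n addr0 //.
- move=> k; apply: (cont_ext _ (@lin_cont 0 (pi *+ 2 * ((k : nat)%:R / p%:R)))) => t.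
  by rewrite /aW1 mul0r add0r.
Qed.

Lemma good_aW2 : good_ang aW2.
Proof.
split.
- by rewrite /aW2 mulr0 mulr0.
- move=> s t k l; exists 0%N; rewrite /aW2 mulr0n addr0 -mulrDr; congr (_ * _); ring.
- move=> t k; exists p; rewrite /aW2 -[X in _ = _ + X]mulr_natr -mulrDr; congr (_ * _); ring.
- move=> k; apply: (cont_ext _ (@lin_cont (pi *+ 2 * p%:R) 0)) => t.
  by rewrite /aW2 addr0 mulrA.
Qed.

End Angles.

Section Map.
Variables (R : realType) (p : nat) (hp : (1 < p)%N).

Definition el (x : 'rV[R]_(2 + 2)) := ofr (lsubmx x).
Definition bl (x : 'rV[R]_(2 + 2)) := ofr (rsubmx x).
Definition Fc (x : 'rV[R]_(2 + 2)) : 'rV[R]_(2 + 2) :=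
  row_mx (tor (cmul (el x) (ccj (bl x)))) (tor (cadd (cpow (el x) p) (cpow (bl x) p))).
Definition nrm n (u : 'rV[R]_n) := (Num.sqrt (sqn u))^-1 *: u.
Definition fmap x := nrm (Fc x).

Lemma mul_bdiag (x : 'rV[R]_(2 + 2)) (A B : 'M[R]_2) :
  x *m block_mx A 0 0 B = row_mx (lsubmx x *m A) (rsubmx x *m B).
Proof. by rewrite -{1}(hsubmxK x) mul_row_block !mulmx0 addr0 add0r. Qed.

Lemma tor_rot (z : R * R) (t : R) : tor z *m rotm t = tor (cmul z (cE t)).
Proof. by apply: ofr_inj; rewrite ofr_rot !torK. Qed.

Lemma cid1 (e b u w : R * R) : cn2 u = 1 ->
  cmul (cmul e (cmul u w)) (ccj (cmul b u)) = cmul (cmul e (ccj b)) w.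
Proof.
rewrite /cn2 /cmul /ccj /= => hu; congr pair; rewrite -[RHS]mulr1 -hu; ring.
Qed.

Lemma Fc_equiv x t k :
  Fc (x *m brep (@aV1 R p) (@aV2 R p) t k) = Fc x *m brep (@aW1 R p) (@aW2 R p) t k.
Proof.
rewrite /brep !mul_bdiag /Fc /el /bl !row_mxKl !row_mxKr !tor_rot !ofr_rot.
congr row_mx; congr tor.
- have -> : @aV1 R p t k = @aV2 R p t k + @aW1 R p t k by rewrite /aV1 /aV2 /aW1 mulrDr.
  by rewrite cEadd cid1 // cn2E.
- rewrite !cpowM !cpowE.
  have -> : @aV2 R p t k *+ p = @aW2 R p t k.
    by rewrite /aV2 /aW2 -[in LHS]mulr_natr mulrCA mulrC.
  have -> : @aV1 R p t k *+ p = @aW2 R p t k + (pi *+ 2) *+ k.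
    have hk : ((k : nat)%:R / p%:R) * (p%:R : R) = (k : nat)%:R.
      by rewrite mulfVK // pR_neq0.
    rewrite /aV1 /aW2 -[in LHS]mulr_natr -[X in _ = _ + X]mulr_natr.
    move: ((k : nat)%:R / p%:R) hk => c hk; rewrite -hk; ring.
  by rewrite cE_per -cmulDl.
Qed.

Lemma sqn_bdiag (u : 'rV[R]_(2 + 2)) a b :
  sqn (u *m block_mx (rotm a) 0 0 (rotm b)) = sqn u.
Proof.
by rewrite mul_bdiag sq_row !sq_rot -sq_row hsubmxK.
Qed.

Lemma nrm_bdiag (u : 'rV[R]_(2 + 2)) a b :
  nrm (u *m block_mx (rotm a) 0 0 (rotm b)) = nrm u *m block_mx (rotm a) 0 0 (rotm b).
Proof. by rewrite /nrm sqn_bdiag scalemxAl. Qed.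

Lemma fmap_equiv x t k :
  fmap (x *m brep (@aV1 R p) (@aV2 R p) t k) = fmap x *m brep (@aW1 R p) (@aW2 R p) t k.
Proof. by rewrite /fmap Fc_equiv /brep nrm_bdiag. Qed.

End Map.

Section Cont.
Variables (R : realType).

Lemma cat (T U : topologicalType) (f g : T -> U) x :
  (forall y, f y = g y) -> {for x, continuous f} -> {for x, continuous g}.
Proof. by move=> /funext ->. Qed.

Lemma cont_sum (T : topologicalType) (V : normedModType R) (I : Type) (s : seq I)
   (g : I -> T -> V) (x : T) :
  (forall i, {for x, continuous (g i)}) ->
  {for x, continuous (fun y => \sum_(i <- s) g i y)}.
Proof.
move=> hg; elim: s => [|a s IH].
  apply: (@cat _ _ (fun=> 0)); [by move=> y; rewrite big_nil | exact: cst_continuous].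
apply: (@cat _ _ (fun y => g a y + \sum_(i <- s) g i y)); first by move=> y; rewrite big_cons.
by apply: continuousD.
Qed.

Lemma cont_row (T : topologicalType) n (G : T -> 'rV[R]_n) x :
  (forall i, {for x, continuous (fun y => G y 0 i)}) -> {for x, continuous G}.
Proof.
move=> h.
have -> : G = (fun y => \sum_(j < n) G y 0 j *: 'e_j).
  by apply: funext => y; rewrite -row_sum_delta.
apply: cont_sum => j; exact: continuousZr_tmp.
Qed.

Lemma sqn_cont n (u : 'rV[R]_n) : {for u, continuous (@sqn R n)}.
Proof.
rewrite /sqn; apply: cont_sum => i.
by apply: continuousM; exact: coord_continuous.
Qed.

Lemma sqn_ge0 n (u : 'rV[R]_n) : 0 <= sqn u.
Proof. by rewrite /sqn sumr_ge0 // => i _; rewrite sqr_ge0. Qed.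

Lemma sqn_eq0 n (u : 'rV[R]_n) : sqn u = 0 -> u = 0.
Proof.
move=> h; apply/rowP => i; rewrite mxE.
have h' := psumr_eq0P (fun i _ => sqr_ge0 (u ord0 i)) h.
have := h' i isT.
have -> : (0 : 'I_1) = ord0 by apply: val_inj.
by move/eqP; rewrite sqrf_eq0 => /eqP.
Qed.

Lemma nrm_cont n (u : 'rV[R]_n) : sqn u != 0 -> {for u, continuous (@nrm R n)}.
Proof.
move=> hu; rewrite /nrm; apply: continuousZ; last exact: cvg_id.
apply: continuousV.
  by rewrite sqrtr_eq0 -ltNge lt_def hu sqn_ge0.
apply: (@cat _ _ (Num.sqrt \o @sqn R n)) => //.
exact: (continuous_comp (@sqn_cont n u) (@sqrt_continuous R _)).
Qed.

Lemma sqn_nrm n (u : 'rV[R]_n) : sqn u != 0 -> sqn (nrm u) = 1.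
Proof.
move=> hu; rewrite /nrm sqZ exprVn sqr_sqrtr ?sqn_ge0 // mulVf //.
Qed.

Lemma nrm_id n (u : 'rV[R]_n) : sqn u = 1 -> nrm u = u.
Proof. by move=> h; rewrite /nrm h sqrtr1 invr1 scale1r. Qed.

Definition cc (T : topologicalType) (x : T) (z : T -> R * R) :=
  {for x, continuous (fun y => (z y).1)} /\ {for x, continuous (fun y => (z y).2)}.

Lemma cc_mul (T : topologicalType) (x : T) z w : cc x z -> cc x w -> cc x (fun y => cmul (z y) (w y)).
Proof.
move=> [z1 z2] [w1 w2]; rewrite /cc /cmul /=; split.
- by apply: continuousB; apply: continuousM.
- by apply: continuousD; apply: continuousM.
Qed.

Lemma cc_add (T : topologicalType) (x : T) z w : cc x z -> cc x w -> cc x (fun y => cadd (z y) (w y)).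
Proof. by move=> [z1 z2] [w1 w2]; rewrite /cc /cadd /=; split; apply: continuousD. Qed.

Lemma cc_cj (T : topologicalType) (x : T) z : cc x z -> cc x (fun y => ccj (z y)).
Proof. by move=> [z1 z2]; rewrite /cc /ccj /=; split => //; apply: continuousN. Qed.

Lemma cc_pow (T : topologicalType) (x : T) z n : cc x z -> cc x (fun y => cpow (z y) n).
Proof.
move=> hz; elim: n => [|n IH] /=.
  by split; exact: cst_continuous.
exact: cc_mul.
Qed.

Lemma cc_el (x : 'rV[R]_(2 + 2)) : cc x (@el R).
Proof.
rewrite /cc /el /ofr; split.
- by apply: (@cat _ _ (fun y : 'rV[R]_(2+2) => y ord0 (lshift 2 ord0))); [move=> y; rewrite /= !mxE | exact: coord_continuous].
- by apply: (@cat _ _ (fun y : 'rV[R]_(2+2) => y ord0 (lshift 2 i1))); [move=> y; rewrite /= !mxE | exact: coord_continuous].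
Qed.

Lemma cc_bl (x : 'rV[R]_(2 + 2)) : cc x (@bl R).
Proof.
rewrite /cc /bl /ofr; split.
- by apply: (@cat _ _ (fun y : 'rV[R]_(2+2) => y ord0 (rshift 2 ord0))); [move=> y; rewrite /= !mxE | exact: coord_continuous].
- by apply: (@cat _ _ (fun y : 'rV[R]_(2+2) => y ord0 (rshift 2 i1))); [move=> y; rewrite /= !mxE | exact: coord_continuous].
Qed.

Lemma Fc_cont p (x : 'rV[R]_(2 + 2)) : {for x, continuous (@Fc R p)}.
Proof.
apply: cont_row => i.
rewrite -[i](@fintype.splitK 2 2); case: (fintype.split i) => i' /=.
- have [h1 h2] := cc_mul (cc_el x) (cc_cj (cc_bl x)).
  case: (boolP (i' == ord0)) => hi.
  + by apply: (cat _ h1) => y; rewrite /Fc row_mxEl mxE hi.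
  + by apply: (cat _ h2) => y; rewrite /Fc row_mxEl mxE (negbTE hi).
- have [h1 h2] := cc_add (cc_pow p (cc_el x)) (cc_pow p (cc_bl x)).
  case: (boolP (i' == ord0)) => hi.
  + by apply: (cat _ h1) => y; rewrite /Fc row_mxEr mxE hi.
  + by apply: (cat _ h2) => y; rewrite /Fc row_mxEr mxE (negbTE hi).
Qed.

End Cont.

Section Sph.
Variables (R : realType) (p : nat) (hp : (1 < p)%N).

Lemma sqn_split (x : 'rV[R]_(2 + 2)) : sqn x = cn2 (el x) + cn2 (bl x).
Proof. by rewrite -{1}(hsubmxK x) sq_row !sq2. Qed.

Lemma cn2_cj (z : R * R) : cn2 (ccj z) = cn2 z.
Proof. by rewrite /cn2 /= sqrrN. Qed.

Lemma sqn_Fc (x : 'rV[R]_(2 + 2)) : sqn (Fc p x) =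
  cn2 (el x) * cn2 (bl x) + cn2 (cadd (cpow (el x) p) (cpow (bl x) p)).
Proof. by rewrite /Fc sq_row !sq2 !torK cn2_mul cn2_cj. Qed.

Lemma cpow00 n : (0 < n)%N -> cpow ((0 : R), (0 : R)) n = (0, 0).
Proof.
move=> hn; apply: cn2_eq0; rewrite cn2_pow cn2_0 expr0n /=.
by case: n hn.
Qed.

Lemma cadd0 (w : R * R) : cadd (0, 0) w = w.
Proof. by case: w => a b; rewrite /cadd /= !add0r. Qed.
Lemma caddC (z w : R * R) : cadd z w = cadd w z.
Proof. by rewrite /cadd addrC [z.2 + _]addrC. Qed.

Lemma Fc_nz (x : 'rV[R]_(2 + 2)) : sqn x = 1 -> sqn (Fc p x) != 0.
Proof.
have p0 : (0 < p)%N by apply: ltnW.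
rewrite sqn_split sqn_Fc => hx; apply/eqP => h.
have hE := cn2_ge0 (el x); have hB := cn2_ge0 (bl x).
move/eqP: h; rewrite paddr_eq0 ?mulr_ge0 ?cn2_ge0 // => /andP [/eqP h1 /eqP h2].
move/eqP: h1; rewrite mulf_eq0 => /orP [] /eqP h1.
- move: h2; rewrite (cn2_eq0 h1) cpow00 // cadd0 cn2_pow => /eqP.
  rewrite expf_eq0 p0 /= => /eqP h3; move: hx; rewrite h1 h3 addr0 => /eqP.
  by rewrite eq_sym oner_eq0.
- move: h2; rewrite (cn2_eq0 h1) cpow00 // caddC cadd0 cn2_pow => /eqP.
  rewrite expf_eq0 p0 /= => /eqP h3; move: hx; rewrite h1 h3 addr0 => /eqP.
  by rewrite eq_sym oner_eq0.
Qed.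

Definition mpt : 'rV[R]_(2 + 2) := row_mx (tor (1, 0)) 0.

Lemma sqn0 n : sqn (0 : 'rV[R]_n) = 0.
Proof. by rewrite /sqn big1 // => i _; rewrite mxE expr0n. Qed.

Lemma sqn_mpt : sqn mpt = 1.
Proof. by rewrite /mpt sq_row sqn0 addr0 sq2 torK /cn2 /= expr1n expr0n /= addr0. Qed.

Lemma fmap_sph (x : 'rV[R]_(2 + 2)) : sqn x = 1 -> sqn (fmap p x) = 1.
Proof. by move=> hx; rewrite /fmap sqn_nrm // Fc_nz. Qed.

Lemma fmap_miss (x : 'rV[R]_(2 + 2)) : sqn x = 1 -> fmap p x <> mpt.
Proof.
move=> hx heq.
have p0 : (0 < p)%N by apply: ltnW.
have hu := Fc_nz hx.
have cpos : 0 < (Num.sqrt (sqn (Fc p x)))^-1.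
  by rewrite invr_gt0 sqrtr_gt0 lt_def hu sqn_ge0.
move: cpos heq; set c := (Num.sqrt _)^-1 => cpos heq.
have E1 := congr1 (fun v : 'rV[R]_(2+2) => v ord0 (lshift 2 ord0)) heq.
have E2 := congr1 (fun v : 'rV[R]_(2+2) => v ord0 (lshift 2 i1)) heq.
have E3 := congr1 (fun v : 'rV[R]_(2+2) => v ord0 (rshift 2 ord0)) heq.
have E4 := congr1 (fun v : 'rV[R]_(2+2) => v ord0 (rshift 2 i1)) heq.
move: E1 E2 E3 E4 hx; rewrite /fmap /nrm /mpt /Fc -/c /=.
rewrite sqn_split.
case: (el x) => e1 e2; case: (bl x) => b1 b2.
set P := cpow (e1, e2) p; set Q := cpow (b1, b2) p.
have hP : cn2 P = cn2 (e1, e2) ^+ p by rewrite cn2_pow.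
have hQ : cn2 Q = cn2 (b1, b2) ^+ p by rewrite cn2_pow.
have hPQ : (e1, e2) = (b1, b2) -> P = Q by rewrite /P /Q => ->.
move: P Q hP hQ hPQ => [P1 P2] [Q1 Q2] hP hQ hPQ.
rewrite /cmul /ccj /cadd /=.
move=> E1 E2 E3 E4 hx.
move: E1; rewrite mxE !row_mxEl !mxE /= => E1.
move: E2; rewrite mxE !row_mxEl !mxE /= => E2.
move: E3; rewrite mxE !row_mxEr !mxE /= => E3.
move: E4; rewrite mxE !row_mxEr !mxE /= => E4.
have c0 : c != 0 by rewrite gt_eqF.
have hP1 : P1 = - Q1 by apply/eqP; rewrite -subr_eq0 opprK; apply/eqP; apply: (mulfI c0); rewrite mulr0.
have hP2 : P2 = - Q2 by apply/eqP; rewrite -subr_eq0 opprK; apply/eqP; apply: (mulfI c0); rewrite mulr0.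
set En := cn2 (e1, e2) in hP hx; set Bn := cn2 (b1, b2) in hQ hx.
have hEB : En ^+ p = Bn ^+ p by rewrite -hP -hQ /cn2 /= hP1 hP2 !sqrrN.
have hEB' : En = Bn by apply/eqP; rewrite -(eqrXn2 p0) ?cn2_ge0 // hEB.
set d := e1 * b1 + e2 * b2.
have hd : c * d = 1 by rewrite -E1 /d; congr (_ * _); ring.
have dpos : 0 < d.
  rewrite ltNge; apply/negP => hd0.
  have : c * d <= 0 by rewrite pmulr_rle0.
  by rewrite hd ler10.
have hw : e1 * - b2 + e2 * b1 = 0 by apply: (mulfI c0); rewrite mulr0.
have hd2 : d ^+ 2 = En ^+ 2.
  have : d ^+ 2 + (e1 * - b2 + e2 * b1) ^+ 2 = En * Bn by rewrite /d /En /Bn /cn2 /=; ring.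
  by rewrite hw expr0n /= addr0 -hEB' -expr2.
have hdE : d = En.
  by apply/eqP; rewrite -(@eqrXn2 _ 2 d En) // ?(ltW dpos) ?cn2_ge0 // hd2.
have heb : (e1, e2) = (b1, b2).
  have : cn2 (e1 - b1, e2 - b2) = 0.
    have -> : cn2 (e1 - b1, e2 - b2) = En + Bn - d *+ 2.
      by rewrite /En /Bn /d /cn2 /=; ring.
    by rewrite -hEB' hdE subrr.
  by move/cn2_eq0 => [] /eqP; rewrite subr_eq0 => /eqP -> /eqP; rewrite subr_eq0 => /eqP ->.
case: (hPQ heb) => hq1 hq2.
have hP0 : (P1, P2) = (0, 0).
  congr pair.
    by apply/eqP; move: hP1; rewrite hq1 => /eqP; rewrite -addr_eq0 -mulr2n mulrn_eq0.
  by apply/eqP; move: hP2; rewrite hq2 => /eqP; rewrite -addr_eq0 -mulr2n mulrn_eq0.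
move: hP; rewrite hP0 cn2_0 => /esym /eqP; rewrite expf_eq0 p0 /= => /eqP hE0.
by move: dpos; rewrite hdE hE0 ltxx.
Qed.

End Sph.

Section Fin.
Variables (R : realType) (p : nat) (hp : (1 < p)%N).

Definition inner (tx : R * 'rV[R]_(2 + 2)) := (1 - tx.1) *: fmap p tx.2 - tx.1 *: mpt R.
Definition Hm tx := nrm (inner tx).

Lemma inner_nz t x : sqn x = 1 -> sqn (inner (t, x)) != 0.
Proof.
move=> hx; apply/eqP => /sqn_eq0; rewrite /inner /= => /eqP; rewrite subr_eq0 => /eqP h.
have h2 := congr1 (@sqn R _) h.
move: h2; rewrite [X in X = _]sqZ (fmap_sph hp hx) sqZ sqn_mpt !mulr1 => h2.
have ht : t = 2^-1.
  have : (1 - t) ^+ 2 - t ^+ 2 = 0 by rewrite h2 subrr.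
  have -> : (1 - t) ^+ 2 - t ^+ 2 = 1 - t *+ 2 by ring.
  move/eqP; rewrite subr_eq0 => /eqP h3.
  have h4 : t = (t *+ 2) / 2 by rewrite -[t *+ 2]mulr_natr mulfK // pnatr_eq0.
  by rewrite h4 -h3 div1r.
move: h; rewrite ht.
have -> : 1 - 2^-1 = 2^-1 :> R by field.
move/scalerI; rewrite invr_eq0 pnatr_eq0 => /(_ isT) h.
exact: (fmap_miss hp hx h).
Qed.

Lemma fmap_cont (x : 'rV[R]_(2 + 2)) : sqn x = 1 -> {for x, continuous (fmap p)}.
Proof.
move=> hx; apply: continuous_comp; first exact: Fc_cont.
exact: nrm_cont (Fc_nz hp hx).
Qed.

Lemma inner_cont t (x : 'rV[R]_(2 + 2)) : sqn x = 1 -> {for (t, x), continuous inner}.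
Proof.
move=> hx; rewrite /inner; apply: continuousB.
- apply: continuousZ.
  + apply: continuousB; first exact: cst_continuous. exact: cvg_fst.
  + apply: (@cat _ _ (fmap p \o snd)) => //.
    apply: continuous_comp; first exact: cvg_snd.
    exact: fmap_cont.
- apply: continuousZr_tmp; exact: cvg_fst.
Qed.

Lemma Hm_cont t (x : 'rV[R]_(2 + 2)) : sqn x = 1 -> {for (t, x), continuous Hm}.
Proof.
move=> hx; apply: continuous_comp; first exact: inner_cont.
exact: nrm_cont (inner_nz t hx).
Qed.

End Fin.

Section Main.
Variables (R : realType) (p : nat) (hp : (1 < p)%N).

Lemma vNv n (v : 'rV[R]_n) : v = - v -> v = 0.
Proof.
move=> h; have : (2 : R) *: v = 0 by rewrite scaler_nat mulr2n {1}h addNr.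
by move/eqP; rewrite scaler_eq0 pnatr_eq0 /= => /eqP.
Qed.

Lemma fpfV : fixed_point_free (brep (@aV1 R p) (@aV2 R p)).
Proof.
move=> v /(_ (2^-1) 0).
have a1 : @aV1 R p 2^-1 0 = pi.
  by rewrite /aV1 (Zp_val0 hp) mul0r addr0 -[pi *+ 2]mulr_natr mulfK // pnatr_eq0.
have a2 : @aV2 R p 2^-1 0 = pi by rewrite /aV2 -[pi *+ 2]mulr_natr mulfK // pnatr_eq0.
rewrite /brep a1 a2 rot_pi mul_bdiag !mulmxN !mulmx1 -opp_row_mx hsubmxK => h.
by apply: vNv; rewrite {1}h.
Qed.

Lemma Zp_val1 : (nat_of_ord (1%R : 'Z_p) = 1)%N.
Proof. by case: p hp => [|[|p']]. Qed.

Lemma cos_lt1 : cos (pi *+ 2 * (1 / p%:R)) < 1 :> R.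
Proof.
have p0 : (0 : R) < p%:R by rewrite ltr0n ltnW.
have -> : pi *+ 2 * (1 / p%:R) = (pi / p%:R) *+ 2 :> R by rewrite -[(pi / p%:R) *+ 2]mulr_natr -[pi *+ 2]mulr_natr; field; rewrite gt_eqF.
rewrite cos_mulr2n cos2sin2.
have : 0 < sin (pi / p%:R) :> R.
  apply: sin_gt0_pi; apply/andP; split; first by rewrite divr_gt0 // pi_gt0.
  rewrite ltr_pdivrMr // ltr_pMr ?pi_gt0 // ltr1n //.
move=> hs; have : 0 < sin (pi / p%:R) ^+ 2 :> R.
  by apply: mulr_gt0.
move: (sin (pi / p%:R) ^+ 2) => s hs2.
rewrite mulr2n; lra.
Qed.

Lemma rot_fix_0 (z : 'rV[R]_2) t : cos t < 1 -> z *m rotm t = z -> z = 0.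
Proof.
move=> hc h.
have hz : cmul (ofr z) (cE t) = ofr z by rewrite -ofr_rot h.
have hcs := cos2Dsin2 t.
move: (ofr z) hz (ofrK z) => [z1 z2] hz0 hz.
move: hz0; rewrite /cmul /cE /= => [[h1 h2]].
have e1 : z1 = 0.
  have : z1 * ((cos t - 1) ^+ 2 + sin t ^+ 2) = 0.
    have -> : z1 * ((cos t - 1) ^+ 2 + sin t ^+ 2) =
      (z1 * cos t - z2 * sin t - z1) * (cos t - 1) + (z1 * sin t + z2 * cos t - z2) * sin t by ring.
    by rewrite h1 h2 !subrr !mul0r addr0.
  move/eqP; rewrite mulf_eq0 => /orP [/eqP //|].
  have -> : (cos t - 1) ^+ 2 + sin t ^+ 2 = (cos t ^+ 2 + sin t ^+ 2) + 1 - cos t *+ 2 by ring.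
  rewrite hcs => /eqP h3; move: hc; rewrite mulr2n in h3; lra.
have e2 : z2 = 0.
  have : z2 * ((cos t - 1) ^+ 2 + sin t ^+ 2) = 0.
    have -> : z2 * ((cos t - 1) ^+ 2 + sin t ^+ 2) =
      (z1 * sin t + z2 * cos t - z2) * (cos t - 1) - (z1 * cos t - z2 * sin t - z1) * sin t by ring.
    by rewrite h1 h2 !subrr !mul0r subr0.
  move/eqP; rewrite mulf_eq0 => /orP [/eqP //|].
  have -> : (cos t - 1) ^+ 2 + sin t ^+ 2 = (cos t ^+ 2 + sin t ^+ 2) + 1 - cos t *+ 2 by ring.
  rewrite hcs => /eqP h3; move: hc; rewrite mulr2n in h3; lra.
rewrite -hz e1 e2; apply/rowP => j; rewrite !mxE; by case: ifP.
Qed.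

End Main.

Lemma fpfW (R : realType) (p : nat) (hp : (1 < p)%N) : fixed_point_free (brep (@aW1 R p) (@aW2 R p)).
Proof.
move=> v hv.
have p0 : (p%:R : R) != 0 by rewrite pnatr_eq0 -lt0n ltnW.
have hr : rsubmx v = 0.
  have := hv (2^-1 / p%:R) 0.
  have a1 : @aW1 R p (2^-1 / p%:R) 0 = 0 by rewrite /aW1 (Zp_val0 hp) mul0r mulr0.
  have a2 : @aW2 R p (2^-1 / p%:R) 0 = pi.
    rewrite /aW2; have -> : (p%:R : R) * (2^-1 / p%:R) = 2^-1 by rewrite mulrCA mulfV // mulr1.
    by rewrite -[pi *+ 2]mulr_natr mulfK // pnatr_eq0.
  rewrite /brep a1 a2 rot_pi rotm0 mul_bdiag mulmx1 mulmxN mulmx1.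
  rewrite -{3}(hsubmxK v) => /eq_row_mx [_ h]; apply: vNv; by rewrite -{1}h.
have hl : lsubmx v = 0.
  have := hv 0 1.
  rewrite /brep mul_bdiag.
  have a2 : @aW2 R p 0 1 = 0 by rewrite /aW2 !mulr0.
  rewrite a2 rotm0 mulmx1 -{3}(hsubmxK v) => /eq_row_mx [h _].
  apply: (rot_fix_0 _ h).
  by rewrite /aW1 (Zp_val1 hp); apply: cos_lt1.
by rewrite -(hsubmxK v) hl hr row_mx0.
Qed.

Unset Implicit Arguments.
Set Strict Implicit.
Theorem proposition4p1 (R : realType) (p : nat) (hp : prime p) :
  exists (n : nat) (rhoV rhoW : R -> 'Z_p -> 'M[R]_n)
         (f : 'rV[R]_n -> 'rV[R]_n),
    [/\ orth_rep rhoV /\ orth_rep rhoW,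
        fixed_point_free rhoV /\ fixed_point_free rhoW,
        Gmap rhoV rhoW f & has_degree f 0].
Proof.
have hp1 := prime_gt1 hp.
exists (2 + 2)%N, (brep (@aV1 R p) (@aV2 R p)), (brep (@aW1 R p) (@aW2 R p)), (fmap p).
split.
- split; apply: brep_orth.
  + exact: good_aV1.
  + exact: good_aV2.
  + exact: good_aW1.
  + exact: good_aW2.
- split; [exact: fpfV | exact: fpfW].
- split.
  + move=> x hx; exact: (fmap_sph hp1 hx).
  + apply: continuous_in_subspaceT => x; rewrite inE => hx; exact: (fmap_cont hp1 hx).
  + move=> x t k _; exact: fmap_equiv.
- exists (cst (- mpt R)), setT, (Hm p), (mpt R), [::].
  split.
  + by split; [exact: openT|].
  + split; [move=> x _; exact: differentiable_cst | split].
    * move=> i j x _.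
      apply: (@cat _ _ (fun=> lin1_mx (0 : 'rV[R]_(2+2) -> 'rV[R]_(2+2)) i j)).
        by move=> y; rewrite /jacobian diff_cst.
      exact: cst_continuous.
    * by move=> x _; exact: (etrans (sqN (mpt R)) (sqn_mpt R)).
  + split.
    * apply: continuous_in_subspaceT => -[t x]; rewrite inE => -[_ hx].
      exact: (Hm_cont hp1 (t:=t) hx).
    * move=> t x _ hx; exact: (sqn_nrm (inner_nz hp1 t hx)).
    * move=> x hx; rewrite /Hm /inner /= subr0 scale1r scale0r subr0 nrm_id //.
      exact: (fmap_sph hp1 hx).
    * move=> x hx; rewrite /Hm /inner /= subrr scale0r scale1r add0r nrm_id //.
      by rewrite sqN sqn_mpt.
  + split.
    * exact: sqn_mpt.
    * by [].
    * move=> x; rewrite in_nil; split => // -[_ h].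
      have h0 : mpt R = 0 by apply: vNv; rewrite -{1}h.
      by move: (sqn_mpt R); rewrite h0 sqn0 => /eqP; rewrite eq_sym oner_eq0.
    * by move=> x; rewrite in_nil.
  + by rewrite big_nil.
Qed.
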